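(* Let $\mathcal D=(D,<,\rho)$ be a computable partially ordered set. Let $c:\{0,1\}^*\times\{0,1\}^*\to\{0,1\}^*$ be a total computable injective map, and let $J:\mathbb N\times\mathbb N\to\mathbb N$ and $M\in\mathbb N$ be such that $|c(p,q)|\le J(|p|,|q|)+M$ for all $p,q\in\{0,1\}^*$. Then $$K^D\le_{ct}J(K^{\mathcal D}_{\min},K^{\mathcal D}_{\max}).$$ In particular (with the convention $\log(0)=0$), $K^D\le_{ct}(K^{\mathcal D}_{\max}+\log(K^{\mathcal D}_{\max}))+(K^{\mathcal D}_{\min}+\log(K^{\mathcal D}_{\min}))$.
   Context: A computable partially ordered set is a triple $\mathcal D=(D,<,\rho)$ where $\rho:\mathbb N\to D$ is a bijection and $<$ is a strict partial order on $D$ with $\{(m,n):\rho(m)<\rho(n)\}$ computable; partial computability of maps into $D$ is via $\rho^{-1}$. For a partial $f:\{0,1\}^*\times\mathbb N\to D$ monotone increasing in its second argument on its domain, $\max^{\mathcal D}f$ is the partial function defined exactly at those $p$ for which $\{f(p,t):t,\ f(p,t)\text{ defined}\}$ is finite and non-empty, with value its maximum element. $\mathrm{Max}_{\mathrm{PR}}[\{0,1\}^*\to\mathcal D]$ is the class of all $\max^{\mathcal D}f$ with $f$ partial computable and monotone increasing in its second argument. For partial $\varphi:\{0,1\}^*\to D$, $K_\varphi(d)=\min\{|p|:\varphi(p)=d\}$. $K^D$ is $K_\varphi$ for $\varphi$ optimal among partial computable functions $\{0,1\}^*\to D$ (i.e. for every partial computable $\psi$, $K_\varphi\le K_\psi+c$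 wherever $K_\psi$ is defined, for some constant $c$). $K^{\mathcal D}_{\max}$ is $K_U$ for some $U$ optimal in the same sense within $\mathrm{Max}_{\mathrm{PR}}[\{0,1\}^*\to\mathcal D]$; $K^{\mathcal D}_{\min}$ is $K^{\mathcal D'}_{\max}$ for the reverse order $\mathcal D'=(D,>,\rho)$. All are total functions $D\to\mathbb N$ defined up to an additive constant. $f\le_{ct}g$ iff $\exists c\,\forall d\ f(d)\le g(d)+c$. *)

(* Defs.v *)
From Stdlib Require Import List Arith ClassicalEpsilon.
Import ListNotations.

Inductive prog : Type :=
| PZero : prog
| PSucc : prog
| PProj : nat -> prog
| PComp : prog -> list prog -> prog
| PPrec : prog -> prog -> prog
| PMu   : prog -> prog.

Inductive eval : prog -> list nat -> nat -> Prop :=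
| eZero xs : eval PZero xs 0
| eSucc xs : eval PSucc xs (S (hd 0 xs))
| eProj i xs : eval (PProj i) xs (nth i xs 0)
| eComp f gs xs ys z :
    Forall2 (fun g y => eval g xs y) gs ys -> eval f ys z -> eval (PComp f gs) xs z
| ePrec0 f g xs y : eval f xs y -> eval (PPrec f g) (0 :: xs) y
| ePrecS f g n xs z y :
    eval (PPrec f g) (n :: xs) z -> eval g (n :: z :: xs) y ->
    eval (PPrec f g) (S n :: xs) y
| eMu f xs n :
    eval f (n :: xs) 0 ->
    (forall m, m < n -> exists k, eval f (m :: xs) (S k)) ->
    eval (PMu f) xs n.

Definition bstr := list bool.

(* bijective base-2 encoding of {0,1}^* into nat *)
Definition code (p : bstr) : nat :=
  fold_left (fun n (b : bool) => 2 * n + 1 + (if b then 1 else 0)) p 0.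

Definition strict_porder {D : Type} (lt : D -> D -> Prop) : Prop :=
  (forall x, ~ lt x x) /\ (forall x y z, lt x y -> lt y z -> lt x z).

Definition bijective_nat {D : Type} (rho : nat -> D) : Prop :=
  (forall m n, rho m = rho n -> m = n) /\ (forall d, exists n, rho n = d).

Definition computable_order {D : Type} (lt : D -> D -> Prop) (rho : nat -> D) : Prop :=
  exists e : prog, forall m n,
    (eval e [m; n] 1 <-> lt (rho m) (rho n)) /\
    (eval e [m; n] 0 <-> ~ lt (rho m) (rho n)).

Definition computable_poset {D : Type} (lt : D -> D -> Prop) (rho : nat -> D) : Prop :=
  strict_porder lt /\ bijective_nat rho /\ computable_order lt rho.

(* partial computable maps into D, via rho^{-1} *)
Definition pc_str_D {D : Type} (rho : nat -> D) (phi : bstr -> option D) : Prop :=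
  exists e : prog, forall p m, eval e [code p] m <-> phi p = Some (rho m).

Definition pc_str_nat_D {D : Type} (rho : nat -> D) (f : bstr -> nat -> option D) : Prop :=
  exists e : prog, forall p t m, eval e [code p; t] m <-> f p t = Some (rho m).

Definition total_computable_str2 (c : bstr -> bstr -> bstr) : Prop :=
  exists e : prog, forall p q n, eval e [code p; code q] n <-> n = code (c p q).

Definition monotone_incr {D : Type} (lt : D -> D -> Prop) (f : bstr -> nat -> option D) : Prop :=
  forall p t t' d d', t <= t' -> f p t = Some d -> f p t' = Some d' -> d = d' \/ lt d d'.

Definition is_max_of {D : Type} (lt : D -> D -> Prop) (g : nat -> option D) (d : D) : Prop :=
  (exists t, g t = Some d) /\
  (exists s : list D, forall t e, g t = Some e -> In e s) /\
  (forall t e, g t = Some e -> e = d \/ lt e d).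

Definition is_maxD {D : Type} (lt : D -> D -> Prop) (f : bstr -> nat -> option D)
  (U : bstr -> option D) : Prop :=
  forall p d, U p = Some d <-> is_max_of lt (f p) d.

Definition MaxPR {D : Type} (lt : D -> D -> Prop) (rho : nat -> D) (U : bstr -> option D) : Prop :=
  exists f, pc_str_nat_D rho f /\ monotone_incr lt f /\ is_maxD lt f U.

Definition isK {D : Type} (phi : bstr -> option D) (d : D) (k : nat) : Prop :=
  (exists p, phi p = Some d /\ length p = k) /\ (forall p, phi p = Some d -> k <= length p).

(* K_phi(d) = min {|p| : phi p = d}  (arbitrary value where undefined) *)
Definition K {D : Type} (phi : bstr -> option D) (d : D) : nat :=
  epsilon (inhabits 0) (isK phi d).

Definition optimal_in {D : Type} (C : (bstr -> option D) -> Prop) (phi : bstr -> option D) : Prop :=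
  C phi /\ forall psi, C psi -> exists c, forall d p, psi p = Some d ->
    exists p', phi p' = Some d /\ length p' <= K psi d + c.

Definition le_ct {D : Type} (f g : D -> nat) : Prop :=
  exists c, forall d, f d <= g d + c.

(* log with log(0) = 0 (binary, rounded down) *)
Definition log (n : nat) : nat := Nat.log2 n.

(* Main.v *)
Require Import Defs.
From Stdlib Require Import List Arith Lia Classical ClassicalEpsilon.
Import ListNotations.


Section EvalInd.
Variable P : prog -> list nat -> nat -> Prop.
Hypothesis HZ : forall xs, P PZero xs 0.
Hypothesis HS : forall xs, P PSucc xs (S (hd 0 xs)).
Hypothesis HP : forall i xs, P (PProj i) xs (nth i xs 0).
Hypothesis HC : forall f gs xs ys z,
  Forall2 (fun g y => eval g xs y /\ P g xs y) gs ys -> eval f ys z -> P f ys z ->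
  P (PComp f gs) xs z.
Hypothesis HR0 : forall f g xs y, eval f xs y -> P f xs y -> P (PPrec f g) (0 :: xs) y.
Hypothesis HRS : forall f g n xs z y,
    eval (PPrec f g) (n :: xs) z -> P (PPrec f g) (n :: xs) z ->
    eval g (n :: z :: xs) y -> P g (n :: z :: xs) y ->
    P (PPrec f g) (S n :: xs) y.
Hypothesis HM : forall f xs n,
    eval f (n :: xs) 0 -> P f (n :: xs) 0 ->
    (forall m, m < n -> exists k, eval f (m :: xs) (S k) /\ P f (m :: xs) (S k)) ->
    P (PMu f) xs n.

Fixpoint eval_ind2 e xs v (H : eval e xs v) {struct H} : P e xs v.
Proof.
  destruct H.
  - apply HZ.
  - apply HS.
  - apply HP.
  - apply (HC f gs xs ys z); [| exact H0 | exact (eval_ind2 _ _ _ H0)].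
    clear H0. induction H as [|g y gs' ys' Hg Hr IH]; constructor.
    + split; [exact Hg | exact (eval_ind2 _ _ _ Hg)].
    + exact IH.
  - apply HR0; [exact H | exact (eval_ind2 _ _ _ H)].
  - eapply HRS; [exact H | exact (eval_ind2 _ _ _ H) | exact H0 | exact (eval_ind2 _ _ _ H0)].
  - apply HM; [exact H | exact (eval_ind2 _ _ _ H) |].
    intros m Hm. destruct (H0 m Hm) as [k Hk]. exists k.
    split; [exact Hk | exact (eval_ind2 _ _ _ Hk)].
Qed.
End EvalInd.

Lemma eval_det : forall e xs v, eval e xs v -> forall v', eval e xs v' -> v = v'.
Proof.
  apply (eval_ind2 (fun e xs v => forall v', eval e xs v' -> v = v')).
  - intros xs v' H; inversion H; auto.
  - intros xs v' H; inversion H; auto.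
  - intros i xs v' H; inversion H; auto.
  - intros f gs xs ys z HF Hf IHf v' H. inversion H; subst.
    match goal with HH : Forall2 _ gs ?ys0 |- _ => rename HH into H2; rename ys0 into ys1 end.
    assert (ys = ys1).
    { clear - HF H2. revert ys1 H2. induction HF as [|g y gs' ys' [Hg IHg] Hr IH]; intros ys0 H2;
      inversion H2; subst; auto. f_equal; auto. }
    subst. auto.
  - intros f g xs y Hf IH v' H. inversion H; subst; auto.
  - intros f g n xs z y Hr IHr Hg IHg v' H. inversion H; subst.
    match goal with HH : eval (PPrec f g) (n :: xs) _ |- _ => apply IHr in HH end. subst. auto.
  - intros f xs n Hf IHf Hlt v' H. inversion H; subst.
    match goal with HH : forall m, m < v' -> _ |- _ => rename HH into H3 end.
    match goal with HH : eval f (v' :: xs) 0 |- _ => rename HH into H1 end.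
    destruct (lt_eq_lt_dec n v') as [[Hl|Hl]|Hl]; auto.
    + destruct (H3 n Hl) as [k Hk]. apply IHf in Hk. discriminate.
    + destruct (Hlt v' Hl) as [k [Hk IH]]. apply IH in H1. discriminate.
Qed.

Definition psucc p := PComp PSucc [p].
Fixpoint pconst k := match k with 0 => PZero | S k => psucc (pconst k) end.
Definition add2 := PPrec (PProj 0) (psucc (PProj 1)).
Definition padd a b := PComp add2 [a; b].
Definition pred1 := PPrec PZero (PProj 0).
Definition ppred a := PComp pred1 [a].
Definition sub2 := PPrec (PProj 0) (ppred (PProj 1)).
Definition psub a b := PComp sub2 [b; a].
Definition mul2 := PPrec PZero (padd (PProj 1) (PProj 2)).
Definition pmul a b := PComp mul2 [a; b].
Definition cond3 := PPrec (PProj 0) (PProj 3).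
Definition pcond c a b := PComp cond3 [c; a; b].
Definition pisz a := pcond a (pconst 1) (pconst 0).
Definition peq a b := pisz (padd (psub a b) (psub b a)).
Definition pleb a b := pisz (psub a b).
Definition pow2p := PPrec (pconst 1) (padd (PProj 1) (PProj 1)).
Definition ppow2 a := PComp pow2p [a].

Lemma ev_comp1 f g xs y z : eval g xs y -> eval f [y] z -> eval (PComp f [g]) xs z.
Proof. intros. econstructor; eauto. Qed.
Lemma ev_comp2 f g1 g2 xs y1 y2 z : eval g1 xs y1 -> eval g2 xs y2 -> eval f [y1;y2] z ->
  eval (PComp f [g1;g2]) xs z.
Proof. intros. econstructor; eauto. Qed.
Lemma ev_comp3 f g1 g2 g3 xs y1 y2 y3 z : eval g1 xs y1 -> eval g2 xs y2 -> eval g3 xs y3 ->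
  eval f [y1;y2;y3] z -> eval (PComp f [g1;g2;g3]) xs z.
Proof. intros. econstructor; eauto. Qed.

Lemma ev_succ p xs v : eval p xs v -> eval (psucc p) xs (S v).
Proof. intros. eapply ev_comp1; eauto. constructor. Qed.
Lemma ev_const k xs : eval (pconst k) xs k.
Proof. induction k; simpl. constructor. apply ev_succ; auto. Qed.
Lemma ev_proj i xs v : nth i xs 0 = v -> eval (PProj i) xs v.
Proof. intros <-. constructor. Qed.

Lemma ev_prec f g (F : list nat -> nat) (G : nat -> nat -> list nat -> nat) ys :
  eval f ys (F ys) -> (forall k z, eval g (k :: z :: ys) (G k z ys)) ->
  forall n, eval (PPrec f g) (n :: ys) (nat_rect (fun _ => nat) (F ys) (fun k z => G k z ys) n).
Proof. intros Hf Hg n. induction n; simpl. constructor; auto. econstructor; eauto. Qed.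

Ltac evp := first [apply ev_proj; reflexivity | constructor].

Lemma ev_add a b xs A B : eval a xs A -> eval b xs B -> eval (padd a b) xs (A + B).
Proof.
  intros. eapply ev_comp2; eauto.
  assert (H1 := ev_prec (PProj 0) (psucc (PProj 1)) (fun ys => nth 0 ys 0) (fun k z _ => S z) [B]
    ltac:(evp) ltac:(intros; apply ev_succ; evp) A).
  replace (A + B) with (nat_rect (fun _ => nat) (nth 0 [B] 0) (fun _ z => S z) A); [exact H1|].
  simpl. clear. induction A; simpl; lia.
Qed.

Lemma ev_pred a xs A : eval a xs A -> eval (ppred a) xs (pred A).
Proof.
  intros. eapply ev_comp1; eauto.
  assert (H1 := ev_prec PZero (PProj 0) (fun _ => 0) (fun k z _ => k) []
    ltac:(evp) ltac:(intros; evp) A).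
  destruct A; exact H1.
Qed.

Lemma ev_sub a b xs A B : eval a xs A -> eval b xs B -> eval (psub a b) xs (A - B).
Proof.
  intros. eapply ev_comp2; eauto.
  assert (H1 := ev_prec (PProj 0) (ppred (PProj 1)) (fun ys => nth 0 ys 0) (fun k z _ => pred z) [A]
    ltac:(evp) ltac:(intros; apply ev_pred; evp) B).
  replace (A - B) with (nat_rect (fun _ => nat) (nth 0 [A] 0) (fun _ z => pred z) B); [exact H1|].
  simpl. clear. induction B; simpl; lia.
Qed.

Lemma ev_mul a b xs A B : eval a xs A -> eval b xs B -> eval (pmul a b) xs (A * B).
Proof.
  intros. eapply ev_comp2; eauto.
  assert (H1 := ev_prec PZero (padd (PProj 1) (PProj 2)) (fun _ => 0) (fun k z ys => z + nth 0 ys 0) [B]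
    ltac:(evp) ltac:(intros; apply ev_add; evp) A).
  replace (A * B) with (nat_rect (fun _ => nat) 0 (fun _ z => z + nth 0 [B] 0) A); [exact H1|].
  simpl. clear. induction A; simpl; lia.
Qed.

Definition ncond (c a b : nat) := match c with 0 => a | _ => b end.

Lemma ev_cond c a b xs C A B : eval c xs C -> eval a xs A -> eval b xs B ->
  eval (pcond c a b) xs (ncond C A B).
Proof.
  intros. eapply ev_comp3; eauto.
  assert (H2 := ev_prec (PProj 0) (PProj 3) (fun ys => nth 0 ys 0) (fun k z ys => nth 1 ys 0) [A;B]
    ltac:(evp) ltac:(intros; evp) C).
  destruct C; exact H2.
Qed.

Lemma ev_isz a xs A : eval a xs A -> eval (pisz a) xs (if Nat.eqb A 0 then 1 else 0).
Proof. intros. unfold pisz. replace (if Nat.eqb A 0 then 1 else 0) with (ncond A 1 0).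
  apply ev_cond; auto; apply ev_const. destruct A; auto. Qed.

Lemma ev_eq a b xs A B : eval a xs A -> eval b xs B -> eval (peq a b) xs (if Nat.eqb A B then 1 else 0).
Proof.
  intros. unfold peq.
  replace (if Nat.eqb A B then 1 else 0) with (if Nat.eqb ((A - B) + (B - A)) 0 then 1 else 0).
  apply ev_isz, ev_add; apply ev_sub; auto.
  destruct (Nat.eqb_spec A B); destruct (Nat.eqb_spec (A - B + (B - A)) 0); auto; lia.
Qed.

Lemma ev_leb a b xs A B : eval a xs A -> eval b xs B -> eval (pleb a b) xs (if Nat.leb A B then 1 else 0).
Proof.
  intros. unfold pleb.
  replace (if Nat.leb A B then 1 else 0) with (if Nat.eqb (A - B) 0 then 1 else 0).
  apply ev_isz, ev_sub; auto.
  destruct (Nat.leb_spec A B); destruct (Nat.eqb_spec (A - B) 0); auto; lia.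
Qed.

Lemma ev_pow2 a xs A : eval a xs A -> eval (ppow2 a) xs (2 ^ A).
Proof.
  intros. eapply ev_comp1; eauto.
  assert (H1 := ev_prec (pconst 1) (padd (PProj 1) (PProj 1)) (fun _ => 1) (fun k z ys => z + z) []
    ltac:(apply ev_const) ltac:(intros; apply ev_add; evp) A).
  replace (2 ^ A) with (nat_rect (fun _ => nat) 1 (fun _ z => z + z) A); [exact H1|].
  clear. induction A; simpl; lia.
Qed.


Fixpoint prog_ind2 (P : prog -> Prop) (HZ : P PZero) (HS : P PSucc) (HP : forall i, P (PProj i))
  (HC : forall f gs, P f -> Forall P gs -> P (PComp f gs))
  (HR : forall f g, P f -> P g -> P (PPrec f g)) (HM : forall f, P f -> P (PMu f)) e {struct e} : P e :=
  match e with
  | PZero => HZ | PSucc => HS | PProj i => HP i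
  | PComp f gs => HC f gs (prog_ind2 P HZ HS HP HC HR HM f)
      ((fix F (gs : list prog) : Forall P gs := match gs return Forall P gs with [] => Forall_nil P
         | g :: gs' => Forall_cons g (prog_ind2 P HZ HS HP HC HR HM g) (F gs') end) gs)
  | PPrec f g => HR f g (prog_ind2 P HZ HS HP HC HR HM f) (prog_ind2 P HZ HS HP HC HR HM g)
  | PMu f => HM f (prog_ind2 P HZ HS HP HC HR HM f)
  end.

Fixpoint seqopt (l : list (option nat)) : option (list nat) :=
  match l with [] => Some [] | o :: l' =>
    match o, seqopt l' with Some y, Some ys => Some (y :: ys) | _, _ => None end end.

Fixpoint mu_st (h : nat -> option nat) (j : nat) : nat :=
  match j with 0 => 0 | S j' =>
    match mu_st h j' with
    | 0 => match h j' with None => 1 | Some 0 => S (S j') | Some (S _) => 0 end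
    | st => st end end.

Fixpoint run (e : prog) (s : nat) (xs : list nat) {struct e} : option nat :=
  match e with
  | PZero => Some 0
  | PSucc => Some (S (hd 0 xs))
  | PProj i => Some (nth i xs 0)
  | PComp f gs =>
     match seqopt (map (fun g => run g s xs) gs) with Some ys => run f s ys | None => None end
  | PPrec f g => match xs with [] => None | n :: ys =>
       nat_rect (fun _ => option nat) (run f s ys)
         (fun k acc => match acc with Some z => run g s (k :: z :: ys) | None => None end) n end
  | PMu f => match mu_st (fun j => run f s (j :: xs)) s with S (S m) => Some m | _ => None end
  end.

Lemma seqopt_spec l ys : seqopt l = Some ys <-> Forall2 (fun o y => o = Some y) l ys.
Proof.
  revert ys; induction l as [|o l IH]; intros ys; simpl.
  - split. intros H; inversion H; constructor. intros H; inversion H; auto.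
  - split.
    + destruct o as [y|]; [|discriminate]. destruct (seqopt l) as [ys'|] eqn:E; [|discriminate].
      intros H; inversion H; subst. constructor; auto. apply IH; auto.
    + intros H; inversion H; subst. apply IH in H4. rewrite H4. auto.
Qed.

Lemma mu_st_zero h j : (forall k, k < j -> exists v, h k = Some (S v)) -> mu_st h j = 0.
Proof.
  induction j; intros H; simpl; auto. rewrite IHj by (intros; apply H; lia).
  destruct (H j ltac:(lia)) as [v ->]. auto.
Qed.

Lemma mu_st_zero_inv h j : mu_st h j = 0 -> forall k, k < j -> exists v, h k = Some (S v).
Proof.
  induction j; intros H k Hk; [lia|]. simpl in H.
  destruct (mu_st h j) eqn:E; [|discriminate].
  destruct (h j) as [[|v]|] eqn:E2; try discriminate.
  assert (k < j \/ k = j) as [Hl| ->] by lia; eauto.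
Qed.

Lemma mu_st_found_bw h j m : 
  (m < j /\ h m = Some 0 /\ forall k, k < m -> exists v, h k = Some (S v)) -> mu_st h j = S (S m).
Proof.
  induction j; intros [Hm [H0 Hk]]; [lia|]. simpl.
  assert (m < j \/ m = j) as [Hl| ->] by lia.
  - rewrite IHj by auto. auto.
  - rewrite mu_st_zero by auto. rewrite H0. auto.
Qed.

Lemma mu_st_found_fw h j m : mu_st h j = S (S m) ->
  (m < j /\ h m = Some 0 /\ forall k, k < m -> exists v, h k = Some (S v)).
Proof.
  induction j; simpl; intros H; [discriminate|].
  destruct (mu_st h j) as [|st] eqn:E.
  - assert (Hz := mu_st_zero_inv h j E).
    destruct (h j) as [[|v]|] eqn:E2; try discriminate.
    inversion H; subst. auto.
  - destruct (IHj H) as [? [? ?]]. split; [lia|]. auto.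
Qed.

Lemma mu_st_found h j m : mu_st h j = S (S m) <->
  (m < j /\ h m = Some 0 /\ forall k, k < m -> exists v, h k = Some (S v)).
Proof. split; [apply mu_st_found_fw | apply mu_st_found_bw]. Qed.

Lemma run_mono : forall e s xs v, run e s xs = Some v -> forall s', s <= s' -> run e s' xs = Some v.
Proof.
  induction e as [| |i|f gs IHf IHgs|f g IHf IHg|f IHf] using prog_ind2; intros s xs v H s' Hs; simpl in *; auto.
  - destruct (seqopt (map (fun g => run g s xs) gs)) as [ys|] eqn:E; [|discriminate].
    assert (seqopt (map (fun g => run g s' xs) gs) = Some ys).
    { apply seqopt_spec. apply seqopt_spec in E. clear H. revert ys E.
      induction IHgs as [|g gs' Hg Hgs IH]; intros ys E; inversion E; subst; constructor; eauto. }
    rewrite H0. eauto.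
  - destruct xs as [|n ys]; [discriminate|].
    revert v H. induction n; simpl; intros v H; eauto.
    destruct (nat_rect _ _ _ n) as [z|] eqn:E; [|discriminate].
    rewrite (IHn z eq_refl). eauto.
  - destruct (mu_st (fun j => run f s (j :: xs)) s) as [|[|m]] eqn:E; try discriminate.
    inversion H; subst. apply mu_st_found in E as [Hm [H0 Hk]].
    assert (mu_st (fun j => run f s' (j :: xs)) s' = S (S v)) as ->; auto.
    apply mu_st_found. split; [lia|]. split; eauto.
    intros k Hk'. destruct (Hk k Hk') as [w Hw]. eauto.
Qed.

Lemma run_sound : forall e s xs v, run e s xs = Some v -> eval e xs v.
Proof.
  induction e as [| |i|f gs IHf IHgs|f g IHf IHg|f IHf] using prog_ind2; intros s xs v H; simpl in *.
  - inversion H; constructor.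
  - inversion H; constructor.
  - inversion H; constructor.
  - destruct (seqopt (map (fun g => run g s xs) gs)) as [ys|] eqn:E; [|discriminate].
    econstructor; [|eauto]. apply seqopt_spec in E. clear H. revert ys E.
    induction IHgs as [|g gs' Hg Hgs IH]; intros ys E; inversion E; subst; constructor; eauto.
  - destruct xs as [|n ys]; [discriminate|].
    revert v H. induction n; simpl; intros v H. constructor; eauto.
    destruct (nat_rect _ _ _ n) as [z|] eqn:E; [|discriminate].
    econstructor; eauto.
  - destruct (mu_st (fun j => run f s (j :: xs)) s) as [|[|m]] eqn:E; try discriminate.
    inversion H; subst. apply mu_st_found in E as [Hm [H0 Hk]].
    constructor; eauto. intros k Hk'. destruct (Hk k Hk') as [w Hw]. eauto.
Qed.

Lemma unif_bound (P : nat -> nat -> Prop) n :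
  (forall m s s', P m s -> s <= s' -> P m s') ->
  (forall m, m < n -> exists s, P m s) -> exists s, forall m, m < n -> P m s.
Proof.
  intros Hmono. induction n; intros H. exists 0; intros; lia.
  destruct IHn as [s1 H1]. intros; apply H; lia.
  destruct (H n ltac:(lia)) as [s2 H2]. exists (s1 + s2). intros m Hm.
  assert (m < n \/ m = n) as [Hl| ->] by lia; eapply Hmono; eauto; lia.
Qed.

Lemma run_complete : forall e xs v, eval e xs v -> exists s, run e s xs = Some v.
Proof.
  apply eval_ind2.
  - exists 0; auto.
  - exists 0; auto.
  - exists 0; auto.
  - intros f gs xs ys z HF Hf [s0 Hs0].
    assert (exists s1, forall s, s1 <= s -> seqopt (map (fun g => run g s xs) gs) = Some ys) as [s1 Hs1].
    { clear Hf Hs0. induction HF as [|g y gs' ys' [Hg [sg Hsg]] Hr IH].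
      - exists 0; auto.
      - destruct IH as [s2 Hs2]. exists (sg + s2). intros s Hs. simpl.
        rewrite (run_mono _ _ _ _ Hsg s) by lia. rewrite Hs2 by lia. auto. }
    exists (s0 + s1). simpl. rewrite Hs1 by lia. eapply run_mono; eauto; lia.
  - intros f g xs y Hf [s Hs]. exists s. auto.
  - intros f g n xs z y Hr [s1 Hs1] Hg [s2 Hs2]. exists (s1 + s2). simpl.
    assert (H1 := run_mono (PPrec f g) s1 (n :: xs) z Hs1 (s1 + s2) ltac:(lia)). simpl in H1.
    rewrite H1. eapply run_mono; eauto; lia.
  - intros f xs n Hf [s0 Hs0] Hlt.
    destruct (unif_bound (fun m s => exists k, run f s (m :: xs) = Some (S k)) n) as [s1 Hs1].
    { intros m s s' [k Hk] Hss. exists k. eapply run_mono; eauto. }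
    { intros m Hm. destruct (Hlt m Hm) as [k [_ [s Hs]]]. eauto. }
    exists (s0 + s1 + S n). simpl.
    assert (mu_st (fun j => run f (s0 + s1 + S n) (j :: xs)) (s0 + s1 + S n) = S (S n)) as ->; auto.
    apply mu_st_found. split; [lia|]. split. eapply run_mono; eauto; lia.
    intros k Hk. destruct (Hs1 k Hk) as [w Hw]. exists w. eapply run_mono; eauto; lia.
Qed.


Definition oenc (o : option nat) : nat := match o with None => 0 | Some v => S v end.
Definition projs (from len : nat) : list prog := map PProj (seq from len).

Fixpoint pprod (l : list prog) : prog :=
  match l with [] => pconst 1 | g :: l' => pmul g (pprod l') end.

Fixpoint B (e : prog) (a : nat) {struct e} : prog :=
  match e with
  | PZero => pconst 1
  | PSucc => psucc (psucc (PProj 1))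
  | PProj i => psucc (PProj (S i))
  | PComp f gs =>
      pcond (pprod (map (fun g => B g a) gs)) PZero
        (PComp (B f (length gs)) (PProj 0 :: map (fun g => ppred (B g a)) gs))
  | PPrec f g => match a with 0 => PZero | S a' =>
       PComp (PPrec (B f a')
                (pcond (PProj 1) PZero
                   (PComp (B g (S (S a'))) (PProj 2 :: PProj 0 :: ppred (PProj 1) :: projs 3 a'))))
             (PProj 1 :: PProj 0 :: projs 2 a')
     end
  | PMu f =>
      let v := PComp (B f (S a)) (PProj 2 :: PProj 0 :: projs 3 a) in
      ppred (PComp (PPrec PZero
                (pcond (PProj 1)
                   (pcond v (pconst 1) (pcond (ppred v) (psucc (psucc (PProj 0))) PZero))
                   (PProj 1)))
             (PProj 0 :: PProj 0 :: projs 1 a))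
  end.

Lemma ev_projs : forall ys pre post,
  Forall2 (fun g y => eval g (pre ++ ys ++ post) y) (projs (length pre) (length ys)) ys.
Proof.
  induction ys as [|y ys IH]; intros pre post; simpl; constructor.
  - apply ev_proj. rewrite app_nth2 by lia. rewrite Nat.sub_diag. reflexivity.
  - specialize (IH (pre ++ [y]) post). rewrite length_app in IH. simpl in IH.
    rewrite Nat.add_1_r in IH. rewrite <- app_assoc in IH. exact IH.
Qed.

Lemma ev_projs' : forall ys pre xs, xs = pre ++ ys -> forall k, k = length pre ->
  Forall2 (fun g y => eval g xs y) (projs k (length ys)) ys.
Proof. intros ys pre xs -> k ->. pose proof (ev_projs ys pre []) as H. rewrite app_nil_r in H. exact H. Qed.

Lemma ev_pprod : forall gs xs ys, Forall2 (fun g y => eval g xs y) gs ys ->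
  eval (pprod gs) xs (fold_right Nat.mul 1 ys).
Proof.
  intros gs xs ys H. induction H; simpl. apply (ev_const 1). apply ev_mul; auto.
Qed.

Lemma seqopt_oenc_some l ys : seqopt l = Some ys -> map oenc l = map S ys.
Proof.
  revert ys; induction l as [|o l IH]; intros ys H; simpl in *. inversion H; auto.
  destruct o as [y|]; [|discriminate]. destruct (seqopt l) as [ys'|]; [|discriminate].
  inversion H; subst. simpl. f_equal. auto.
Qed.

Lemma seqopt_oenc_none l : seqopt l = None -> fold_right Nat.mul 1 (map oenc l) = 0.
Proof.
  induction l as [|o l IH]; intros H; simpl in *. discriminate.
  destruct o as [y|]; simpl; auto. destruct (seqopt l); [discriminate|]. rewrite IH; auto; lia.
Qed.

Lemma prod_S ys : fold_right Nat.mul 1 (map S ys) <> 0.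
Proof. induction ys; simpl; lia. Qed.

Lemma Forall2_mapl {A B C} (F : A -> B) (R : B -> C -> Prop) l1 l2 :
  Forall2 (fun x y => R (F x) y) l1 l2 -> Forall2 R (map F l1) l2.
Proof. intros H; induction H; simpl; constructor; auto. Qed.

Lemma Forall2_mapr {A B C} (F : B -> C) (R : A -> C -> Prop) l1 l2 :
  Forall2 (fun x y => R x (F y)) l1 l2 -> Forall2 R l1 (map F l2).
Proof. intros H; induction H; simpl; constructor; auto. Qed.

Lemma B_correct : forall e a s xs, length xs = a -> eval (B e a) (s :: xs) (oenc (run e s xs)).
Proof.
  induction e as [| |i|f gs IHf IHgs|f g IHf IHg|f IHf] using prog_ind2; intros a s xs Hlen; simpl.
  - apply (ev_const 1).
  - apply ev_succ, ev_succ. destruct xs; apply ev_proj; reflexivity.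
  - apply ev_succ. apply ev_proj. reflexivity.
  - set (os := map (fun g => run g s xs) gs).
    assert (HF : Forall2 (fun g y => eval (B g a) (s :: xs) y) gs (map oenc os)).
    { subst os. clear - IHgs Hlen. induction IHgs; simpl; constructor; auto. }
    assert (HP := ev_pprod _ _ _ (Forall2_mapl _ (fun g y => eval g (s :: xs) y) _ _ HF)).
    set (ws := map pred (map oenc os)).
    assert (Hws : length ws = length gs) by (subst ws os; rewrite !length_map; auto).
    assert (HX : eval (PComp (B f (length gs)) (PProj 0 :: map (fun g => ppred (B g a)) gs)) (s :: xs)
                  (oenc (run f s ws))).
    { econstructor; [| apply IHf; exact Hws]. constructor. apply ev_proj; reflexivity.
      apply Forall2_mapl. subst ws. apply Forall2_mapr.
      clear - HF. induction HF; constructor; auto. apply ev_pred; auto. }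
    assert (HC := ev_cond _ _ _ _ _ _ _ HP ltac:(constructor) HX).
    destruct (seqopt os) as [ys|] eqn:E.
    + assert (Hm := seqopt_oenc_some _ _ E). rewrite Hm in HC.
      subst ws. rewrite Hm in HC. rewrite map_map in HC. simpl in HC. rewrite map_id in HC.
      destruct (fold_right Nat.mul 1 (map S ys)) eqn:E2; [exfalso; eapply prod_S; eauto|]. exact HC.
    + rewrite (seqopt_oenc_none _ E) in HC. exact HC.
  - destruct a as [|a'].
    + destruct xs; [|discriminate]. constructor.
    + destruct xs as [|n ys]; [discriminate|]. simpl in Hlen. injection Hlen as Hlen. subst a'.
      econstructor.
      { constructor. apply ev_proj; reflexivity. constructor. apply ev_proj; reflexivity.
        apply (ev_projs' ys [s; n]); reflexivity. }
      assert (H := ev_prec (B f (length ys))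
        (pcond (PProj 1) PZero (PComp (B g (S (S (length ys)))) (PProj 2 :: PProj 0 :: ppred (PProj 1) :: projs 3 (length ys))))
        (fun _ => oenc (run f s ys)) (fun k z _ => ncond z 0 (oenc (run g s (k :: pred z :: ys)))) (s :: ys)
        ltac:(apply IHf; auto)).
      assert (H' : forall k z, eval (pcond (PProj 1) PZero (PComp (B g (S (S (length ys))))
          (PProj 2 :: PProj 0 :: ppred (PProj 1) :: projs 3 (length ys)))) (k :: z :: s :: ys)
          (ncond z 0 (oenc (run g s (k :: pred z :: ys))))).
      { intros k z. apply ev_cond. apply ev_proj; reflexivity. constructor.
        econstructor; [| apply IHg; simpl; auto].
        constructor. apply ev_proj; reflexivity. constructor. apply ev_proj; reflexivity.
        constructor. apply ev_pred. apply ev_proj; reflexivity.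
        apply (ev_projs' ys [k; z; s]); reflexivity. }
      specialize (H H' n).
      replace (oenc _) with (nat_rect (fun _ => nat) (oenc (run f s ys))
                  (fun k z => ncond z 0 (oenc (run g s (k :: pred z :: ys)))) n); [exact H|].
      clear. induction n as [|n IHn]; [reflexivity|]. simpl. rewrite IHn.
      destruct (nat_rect (fun _ : nat => option nat) _ _ n) as [z|]; reflexivity.
  - subst a. set (v := PComp (B f (S (length xs))) (PProj 2 :: PProj 0 :: projs 3 (length xs))).
    set (h := fun j => run f s (j :: xs)).
    assert (Hv : forall j st, eval v (j :: st :: s :: xs) (oenc (h j))).
    { intros j st. subst v h. econstructor; [| apply IHf; simpl; auto].
      constructor. apply ev_proj; reflexivity. constructor. apply ev_proj; reflexivity.
      apply (ev_projs' xs [j; st; s]); reflexivity. }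
    set (G := fun j st => ncond st (ncond (oenc (h j)) 1 (ncond (pred (oenc (h j))) (S (S j)) 0)) st).
    assert (H := ev_prec PZero (pcond (PProj 1)
                   (pcond v (pconst 1) (pcond (ppred v) (psucc (psucc (PProj 0))) PZero))
                   (PProj 1)) (fun _ => 0) (fun j st _ => G j st) (s :: xs) ltac:(constructor)).
    assert (H' : forall j st, eval (pcond (PProj 1)
                   (pcond v (pconst 1) (pcond (ppred v) (psucc (psucc (PProj 0))) PZero))
                   (PProj 1)) (j :: st :: s :: xs) (G j st)).
    { intros j st. apply ev_cond. apply ev_proj; reflexivity.
      apply ev_cond; auto. apply (ev_const 1). apply ev_cond. apply ev_pred; auto.
      apply ev_succ, ev_succ, ev_proj; reflexivity. constructor. apply ev_proj; reflexivity. }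
    specialize (H H' s).
    assert (Heq : forall j, nat_rect (fun _ => nat) 0 (fun j st => G j st) j = mu_st h j).
    { induction j as [|j IH]; simpl; auto. rewrite IH. unfold G.
      destruct (mu_st h j) as [|st]; simpl; auto. destruct (h j) as [[|w]|]; simpl; auto. }
    replace (oenc _) with (pred (mu_st h s)) by (destruct (mu_st h s) as [|[|m]]; reflexivity).
    apply ev_pred. econstructor.
    { constructor. apply ev_proj; reflexivity. constructor. apply ev_proj; reflexivity.
      apply (ev_projs' xs [s]); reflexivity. }
    cbv beta in H. rewrite Heq in H. exact H.
Qed.


Lemma code_app p b : code (p ++ [b]) = 2 * code p + 1 + (if b then 1 else 0).
Proof. unfold code. rewrite fold_left_app. reflexivity. Qed.

Fixpoint dec_aux (f n : nat) : bstr :=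
  match f with 0 => [] | S f' => match n with 0 => [] | S m => dec_aux f' (Nat.div2 m) ++ [Nat.odd m] end end.
Definition dec (n : nat) : bstr := dec_aux n n.

Lemma dec_aux_fuel : forall f f' n, n <= f -> n <= f' -> dec_aux f n = dec_aux f' n.
Proof.
  induction f; intros f' n H1 H2.
  - assert (n = 0) as -> by lia. destruct f'; auto.
  - destruct n; [destruct f'; auto|]. destruct f' as [|f']; [lia|]. simpl.
    f_equal. apply IHf; assert (Nat.div2 n <= n) by apply Nat.le_div2_diag_l; lia.
Qed.

Lemma dec_S m : dec (S m) = dec (Nat.div2 m) ++ [Nat.odd m].
Proof. unfold dec. simpl. f_equal. apply dec_aux_fuel; assert (Nat.div2 m <= m) by apply Nat.le_div2_diag_l; lia. Qed.

Lemma code_dec : forall n, code (dec n) = n.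
Proof.
  intros n. induction n as [n IH] using lt_wf_ind. destruct n. reflexivity.
  rewrite dec_S, code_app, IH. 
  - pose proof (Nat.div2_odd n). destruct (Nat.odd n); simpl in *; lia.
  - assert (Nat.div2 n <= n) by apply Nat.le_div2_diag_l; lia.
Qed.

Lemma dec_code : forall p, dec (code p) = p.
Proof.
  induction p as [|b p IH] using rev_ind. reflexivity.
  rewrite code_app. replace (2 * code p + 1 + (if b then 1 else 0)) with (S (2 * code p + (if b then 1 else 0))) by lia.
  rewrite dec_S. destruct b.
  - rewrite Nat.div2_odd', Nat.odd_odd, IH. reflexivity.
  - rewrite Nat.add_0_r, Nat.div2_double, Nat.odd_even, IH. reflexivity.
Qed.

Lemma code_inj p q : code p = code q -> p = q.
Proof. intros H. rewrite <- (dec_code p), <- (dec_code q), H. reflexivity. Qed.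

Lemma code_len p : 2 ^ length p <= code p + 1 < 2 ^ S (length p).
Proof.
  induction p as [|b p IH] using rev_ind. simpl; lia.
  rewrite code_app, length_app. rewrite Nat.add_1_r. 
  change (2 ^ S (length p)) with (2 * 2 ^ length p) in *.
  change (2 ^ S (S (length p))) with (2 * (2 * 2 ^ length p)). destruct b; lia.
Qed.

Lemma len_code p : length p = Nat.log2 (code p + 1).
Proof. symmetry. apply Nat.log2_unique. lia. apply code_len. Qed.


Lemma ev_val e xs v w : eval e xs v -> v = w -> eval e xs w.
Proof. intros H <-; exact H. Qed.

Definition fz h := PPrec PZero (pcond (PProj 1) h (PProj 1)).
Fixpoint firstnz (H : nat -> nat) n := match n with 0 => 0 | S j => ncond (firstnz H j) (H j) (firstnz H j) end.

Lemma ev_fz h ys (H : nat -> nat) : (forall j z, eval h (j :: z :: ys) (H j)) ->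
  forall n, eval (fz h) (n :: ys) (firstnz H n).
Proof.
  intros Hh n.
  assert (X := ev_prec PZero (pcond (PProj 1) h (PProj 1)) (fun _ => 0) (fun k z _ => ncond z (H k) z) ys
    ltac:(constructor) ltac:(intros; apply ev_cond; auto; apply ev_proj; reflexivity) n).
  replace (firstnz H n) with (nat_rect (fun _ => nat) 0 (fun k z => ncond z (H k) z) n); [exact X|].
  clear X Hh. induction n; simpl; auto. rewrite IHn. reflexivity.
Qed.

Lemma firstnz_spec1 H n v : firstnz H n = S v -> exists j, j < n /\ H j = S v.
Proof.
  induction n; simpl; intros E. discriminate.
  destruct (firstnz H n) eqn:E1; simpl in E.
  - exists n; split; auto.
  - destruct IHn as [j [Hj1 Hj2]]; auto. exists j; split; auto.
Qed.

Lemma firstnz_spec2 H n j : j < n -> H j <> 0 -> firstnz H n <> 0.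
Proof.
  induction n; intros Hj Hn; [lia|]. simpl.
  destruct (firstnz H n) eqn:E; simpl; [|lia].
  assert (j < n \/ j = n) as [Hl| ->] by lia; auto. exfalso; apply (IHn Hl Hn); auto.
Qed.

Definition Wl h k := PComp (fz h) (psucc (PProj k) :: projs 0 (k + 2)).

Lemma ev_Wl h k L u (H : nat -> nat) : length L = k + 2 -> nth k L 0 = u ->
  (forall j z, eval h (j :: z :: L) (H j)) -> eval (Wl h k) L (firstnz H (S u)).
Proof.
  intros Hl Hu Hh. econstructor; [| apply ev_fz; exact Hh].
  constructor. apply ev_succ, ev_proj; auto.
  rewrite <- Hl. apply (ev_projs' L []); reflexivity.
Qed.

Section Search.
Variables emin emax ec : prog.

Definition m1p := PComp (B emin 2) [PProj 8; PProj 6; PProj 2].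
Definition m2p := PComp (B emax 2) [PProj 8; PProj 4; PProj 0].
Definition Vp := pcond (peq (PComp ec [PProj 6; PProj 4]) (PProj 9)) PZero (pcond (peq m1p m2p) PZero m1p).
Definition W0p := Wl (Wl (Wl (Wl Vp 6) 4) 2) 0.
Definition Tp := pisz W0p.
Definition Ep := ppred (PComp W0p [PMu Tp; PProj 0]).

Variable Cf : nat -> nat -> nat.
Hypothesis Hec : forall x y, eval ec [x; y] (Cf x y).
Variable r : nat.

Definition Vs u x y t t' :=
  let m1 := oenc (run emin u [x; t]) in let m2 := oenc (run emax u [y; t']) in
  ncond (if Nat.eqb (Cf x y) r then 1 else 0) 0 (ncond (if Nat.eqb m1 m2 then 1 else 0) 0 m1).

Definition S0 u := firstnz (fun x => firstnz (fun y => firstnz (fun t => firstnz (fun t' =>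
   Vs u x y t t') (S u)) (S u)) (S u)) (S u).

Lemma ev_W0 u : eval W0p [u; r] (S0 u).
Proof.
  unfold W0p, S0. apply ev_Wl; auto. intros x a1.
  apply ev_Wl; auto. intros y a2.
  apply ev_Wl; auto. intros t a3.
  apply ev_Wl; auto. intros t' a4.
  unfold Vp, Vs. apply ev_cond.
  - apply ev_eq. econstructor. constructor. apply ev_proj; reflexivity. constructor.
    apply ev_proj; reflexivity. constructor. apply Hec. apply ev_proj; reflexivity.
  - constructor.
  - assert (H1 : eval m1p [t'; a4; t; a3; y; a2; x; a1; u; r] (oenc (run emin u [x; t]))).
    { econstructor; [| apply B_correct; reflexivity].
      repeat constructor; apply ev_proj; reflexivity. }
    assert (H2 : eval m2p [t'; a4; t; a3; y; a2; x; a1; u; r] (oenc (run emax u [y; t']))).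
    { econstructor; [| apply B_correct; reflexivity].
      repeat constructor; apply ev_proj; reflexivity. }
    apply ev_cond; auto. apply ev_eq; auto. constructor.
Qed.

Lemma least_nz (F : nat -> nat) u : F u <> 0 -> exists u0, F u0 <> 0 /\ forall k, k < u0 -> F k = 0.
Proof.
  intros Hu. assert (forall n, (exists k, k < n /\ F k <> 0) -> exists u0, F u0 <> 0 /\ forall k, k < u0 -> F k = 0).
  { induction n; intros [k [Hk Hf]]; [lia|].
    destruct (classic (exists k, k < n /\ F k <> 0)) as [Hex|Hno]; auto.
    exists n. split.
    - assert (k < n \/ k = n) as [Hl| ->] by lia; auto. exfalso; apply Hno; eauto.
    - intros k' Hk'. destruct (Nat.eq_dec (F k') 0); auto. exfalso; apply Hno; eauto. }
  apply (H (S u)). exists u; split; auto.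
Qed.

Lemma Ep_eval u : S0 u <> 0 -> exists u0, S0 u0 <> 0 /\ eval Ep [r] (pred (S0 u0)).
Proof.
  intros Hu. destruct (least_nz S0 u Hu) as [u0 [H0 Hlt]]. exists u0. split; auto.
  apply ev_pred. econstructor; [| apply ev_W0].
  constructor; [| constructor; [apply ev_proj; reflexivity | constructor]].
  constructor.
  - eapply ev_val. apply ev_isz, ev_W0. destruct (Nat.eqb_spec (S0 u0) 0); congruence.
  - intros k Hk. exists 0. eapply ev_val. apply ev_isz, ev_W0. rewrite Hlt; auto.
Qed.

Lemma S0_witness u m : S0 u = S m -> exists x y t t',
  Cf x y = r /\ run emin u [x; t] = Some m /\ run emax u [y; t'] = Some m.
Proof.
  unfold S0. intros H.
  destruct (firstnz_spec1 _ _ _ H) as [x [_ H1]].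
  destruct (firstnz_spec1 _ _ _ H1) as [y [_ H2]].
  destruct (firstnz_spec1 _ _ _ H2) as [t [_ H3]].
  destruct (firstnz_spec1 _ _ _ H3) as [t' [_ H4]].
  exists x, y, t, t'. unfold Vs in H4.
  destruct (Nat.eqb_spec (Cf x y) r); simpl in H4; [|discriminate].
  destruct (run emin u [x; t]) as [v1|]; destruct (run emax u [y; t']) as [v2|]; simpl in H4;
    try discriminate.
  destruct (Nat.eqb_spec v1 v2); simpl in H4; [|discriminate]. inversion H4; subst; auto.
Qed.

Lemma S0_exists x y t t' u : Cf x y = r -> run emin u [x; t] <> None -> run emin u [x; t] = run emax u [y; t'] ->
  x <= u -> y <= u -> t <= u -> t' <= u -> S0 u <> 0.
Proof.
  intros Hc Hn He Hx Hy Ht Ht'. unfold S0.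
  apply (firstnz_spec2 _ _ x); [lia|].
  apply (firstnz_spec2 _ _ y); [lia|].
  apply (firstnz_spec2 _ _ t); [lia|].
  apply (firstnz_spec2 _ _ t'); [lia|].
  unfold Vs. rewrite Hc, Nat.eqb_refl. rewrite He. rewrite Nat.eqb_refl. simpl.
  destruct (run emax u [y; t']); simpl; congruence.
Qed.

End Search.


Lemma least_nat (F : nat -> Prop) n : F n -> exists k, F k /\ forall k', F k' -> k <= k'.
Proof.
  induction n as [n IH] using lt_wf_ind. intros Hn.
  destruct (classic (exists k', F k' /\ k' < n)) as [[k' [Hk' Hl]]|Hno].
  - exact (IH k' Hl Hk').
  - exists n. split; auto. intros k' Hk'. destruct (le_lt_dec n k'); auto.
    exfalso; apply Hno; eauto.
Qed.

Lemma K_spec {D : Type} (phi : bstr -> option D) d : (exists p, phi p = Some d) -> isK phi d (K phi d).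
Proof.
  intros [p Hp]. unfold K. apply epsilon_spec.
  destruct (least_nat (fun k => exists p, phi p = Some d /\ length p = k) (length p)) as [k [[p' [H1 H2]] H3]].
  { eauto. }
  exists k. split; eauto.
Qed.

Lemma K_le {D : Type} (phi : bstr -> option D) d p : phi p = Some d -> K phi d <= length p.
Proof. intros H. apply (K_spec phi d ltac:(eauto)). auto. Qed.

Lemma K_wit {D : Type} (phi : bstr -> option D) d : (exists p, phi p = Some d) ->
  exists p, phi p = Some d /\ length p = K phi d.
Proof. intros H. apply (K_spec phi d H). Qed.

Lemma const_MaxPR {D : Type} (lt : D -> D -> Prop) (rho : nat -> D) d :
  bijective_nat rho -> MaxPR lt rho (fun _ => Some d).
Proof.
  intros [rinj rsurj]. destruct (rsurj d) as [n Hn].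
  exists (fun _ _ => Some d). split; [|split].
  - exists (pconst n). intros p t m. split.
    + intros H. rewrite (eval_det _ _ _ H _ (ev_const n _)), Hn. reflexivity.
    + intros H. inversion H. rewrite <- Hn in H1. apply rinj in H1. subst. apply ev_const.
  - intros p t t' e e' _ H1 H2. inversion H1; inversion H2; subst; auto.
  - intros p e. split.
    + intros H. injection H as <-. split; [exists 0; auto|split].
      * exists [d]. intros t e' H'. injection H' as <-. simpl; auto.
      * intros t e' H'. injection H' as <-. auto.
    + intros [[t Ht] _]. inversion Ht; auto.
Qed.

Lemma opt_hits {D : Type} (lt : D -> D -> Prop) (rho : nat -> D) U d :
  bijective_nat rho -> optimal_in (MaxPR lt rho) U -> exists p, U p = Some d.
Proof.
  intros Hb [_ Hopt]. destruct (Hopt _ (const_MaxPR lt rho d Hb)) as [c Hc].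
  destruct (Hc d [] eq_refl) as [p' [Hp' _]]. eauto.
Qed.

Lemma part1 (D : Type) (lt : D -> D -> Prop) (rho : nat -> D)
  (Hpo : computable_poset lt rho)
  (phi Umax Umin : bstr -> option D)
  (Hphi : optimal_in (pc_str_D rho) phi)
  (Hmax : optimal_in (MaxPR lt rho) Umax)
  (Hmin : optimal_in (MaxPR (fun x y => lt y x) rho) Umin)
  (c : bstr -> bstr -> bstr) (J : nat -> nat -> nat) (M : nat) :
      total_computable_str2 c ->
      (forall p q p' q', c p q = c p' q' -> p = p' /\ q = q') ->
      (forall p q, length (c p q) <= J (length p) (length q) + M) ->
      le_ct (K phi) (fun d => J (K Umin d) (K Umax d)).
Proof.
  intros [ec Hec] Hinj Hlen.
  destruct Hpo as [[Hirr Htr] [Hbij _]]. pose proof Hbij as [rinj rsurj].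
  pose proof Hmin as [[fmin [[emin Hemin] [_ Hmaxmin]]] _].
  pose proof Hmax as [[fmax [[emax Hemax] [_ Hmaxmax]]] _].
  set (Cf := fun x y => code (c (dec x) (dec y))).
  assert (Hec' : forall x y, eval ec [x; y] (Cf x y)).
  { intros x y. rewrite <- (code_dec x), <- (code_dec y) at 1. apply Hec. reflexivity. }
  set (E := Ep emin emax ec).
  set (psi := fun w : bstr => match excluded_middle_informative (exists m, eval E [code w] m) with
     | left H => Some (rho (proj1_sig (constructive_indefinite_description _ H)))
     | right _ => None end).
  assert (Hpsi : pc_str_D rho psi).
  { exists E. intros p m. unfold psi. destruct (excluded_middle_informative _) as [H|H].
    - destruct (constructive_indefinite_description _ H) as [m' Hm']. simpl. split.
      + intros Hm. rewrite (eval_det _ _ _ Hm' _ Hm). reflexivity.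
      + intros Heq. inversion Heq as [Heq']. apply rinj in Heq'. subst; auto.
    - split; [intros Hm; exfalso; eauto | discriminate]. }
  destruct Hphi as [_ Hopt]. destruct (Hopt psi Hpsi) as [c0 Hc0].
  exists (M + c0). intros d.
  destruct (K_wit Umin d (opt_hits _ _ _ d Hbij Hmin)) as [p [Hp Hpl]].
  destruct (K_wit Umax d (opt_hits _ _ _ d Hbij Hmax)) as [q [Hq Hql]].
  destruct (rsurj d) as [m Hm].
  destruct (proj1 (Hmaxmin p d) Hp) as [[t1 Ht1] [_ Hall1]].
  destruct (proj1 (Hmaxmax q d) Hq) as [[t2 Ht2] [_ Hall2]].
  rewrite <- Hm in Ht1, Ht2.
  apply Hemin in Ht1. apply Hemax in Ht2.
  destruct (run_complete _ _ _ Ht1) as [s1 Hs1].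
  destruct (run_complete _ _ _ Ht2) as [s2 Hs2].
  set (r := code (c p q)).
  set (u := code p + code q + t1 + t2 + s1 + s2).
  assert (Hnz : S0 emin emax Cf r u <> 0).
  { apply (S0_exists emin emax Cf r (code p) (code q) t1 t2 u).
    - unfold Cf. rewrite !dec_code. reflexivity.
    - rewrite (run_mono _ _ _ _ Hs1 u) by lia. discriminate.
    - rewrite (run_mono _ _ _ _ Hs1 u) by lia. rewrite (run_mono _ _ _ _ Hs2 u) by lia. reflexivity.
    - lia. - lia. - lia. - lia. }
  destruct (Ep_eval emin emax ec Cf Hec' r u Hnz) as [u0 [Hnz0 Hev]].
  destruct (S0 emin emax Cf r u0) as [|m'] eqn:ES; [congruence|]. simpl in Hev.
  destruct (S0_witness emin emax Cf r u0 m' ES) as [x [y [t [t' [Hcxy [Hr1 Hr2]]]]]].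
  apply run_sound in Hr1. apply run_sound in Hr2.
  assert (Hr1' : eval emin [code (dec x); t] m') by (rewrite code_dec; exact Hr1).
  assert (Hr2' : eval emax [code (dec y); t'] m') by (rewrite code_dec; exact Hr2).
  apply Hemin in Hr1'. apply Hemax in Hr2'. clear Hr1 Hr2. rename Hr1' into Hr1. rename Hr2' into Hr2.
  unfold Cf, r in Hcxy. apply code_inj, Hinj in Hcxy as [Ex Ey]. rewrite Ex in Hr1. rewrite Ey in Hr2.
  assert (Hd : rho m' = d).
  { destruct (Hall1 _ _ Hr1) as [H1|H1]; auto.
    destruct (Hall2 _ _ Hr2) as [H2|H2]; auto.
    exfalso. apply (Hirr d). eapply Htr; eauto. }
  assert (Hpsid : psi (c p q) = Some d).
  { rewrite <- Hd. unfold psi. destruct (excluded_middle_informative _) as [H|H].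
    - destruct (constructive_indefinite_description _ H) as [m'' Hm'']. simpl.
      f_equal. f_equal. eapply eval_det; eauto.
    - exfalso; apply H; eauto. }
  destruct (Hc0 d (c p q) Hpsid) as [p' [Hp' Hp'l]].
  pose proof (K_le phi d p' Hp'). pose proof (K_le psi d _ Hpsid).
  pose proof (Hlen p q). rewrite Hpl, Hql in *. lia.
Qed.


Definition csum h := PPrec PZero (padd (PProj 1) h).
Definition plog2 a := PComp (csum (pleb (ppow2 (psucc (PProj 0))) (PProj 2))) [a; a].

Fixpoint cntlt (A n : nat) : nat := match n with 0 => 0 | S k => cntlt A k + (if Nat.leb (2 ^ S k) A then 1 else 0) end.

Lemma cntlt_spec A n : A > 0 -> cntlt A n = Nat.min n (Nat.log2 A).
Proof.
  intros HA. induction n; cbn [cntlt]; auto. rewrite IHn.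
  destruct (Nat.leb_spec (2 ^ S n) A) as [H|H].
  - apply Nat.log2_le_pow2 in H; auto. lia.
  - assert (~ S n <= Nat.log2 A) by (intros H'; apply Nat.log2_le_pow2 in H'; lia). lia.
Qed.

Lemma ev_log2 a xs A : eval a xs A -> eval (plog2 a) xs (Nat.log2 A).
Proof.
  intros Ha. eapply ev_comp2; eauto.
  assert (X := ev_prec PZero (padd (PProj 1) (pleb (ppow2 (psucc (PProj 0))) (PProj 2)))
     (fun _ => 0) (fun k z ys => z + (if Nat.leb (2 ^ S k) A then 1 else 0)) [A] ltac:(constructor)
     ltac:(intros; apply ev_add; [apply ev_proj; reflexivity|]; apply ev_leb;
           [apply ev_pow2, ev_succ, ev_proj; reflexivity | apply ev_proj; reflexivity]) A).
  eapply ev_val; [exact X|].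
  assert (Hc : forall n, nat_rect (fun _ => nat) 0 (fun k z => z + (if Nat.leb (2 ^ S k) A then 1 else 0)) n = cntlt A n).
  { induction n; cbn [nat_rect cntlt]; auto. }
  cbv beta. rewrite Hc.
  destruct A. reflexivity. rewrite cntlt_spec by lia.
  pose proof (Nat.log2_lt_lin (S A)). lia.
Qed.

Definition enc X Y :=
  let a := Nat.log2 (S X) in let b := Nat.log2 (S Y) in
  let le := Nat.leb a b in
  let f := if le then 0 else 1 in
  let Sx := if le then X else Y in let Lx := if le then Y else X in
  let m := if le then a else b in
  let l := S (Nat.log2 m) in
  let Top := S Lx * 2 ^ m + (S Sx - 2 ^ m) in
  let Z := Top * 2 ^ l + m in
  let N1 := Z * 2 ^ (S l) + pred (2 ^ l) in
  N1 * 2 + f.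

Definition pa := plog2 (psucc (PProj 0)).
Definition pb := plog2 (psucc (PProj 1)).
Definition pc := pleb pa pb.
Definition pf := pcond pc (pconst 1) PZero.
Definition pSx := pcond pc (PProj 1) (PProj 0).
Definition pLx := pcond pc (PProj 0) (PProj 1).
Definition pm := pcond pc pb pa.
Definition pl := psucc (plog2 pm).
Definition pTop := padd (pmul (psucc pLx) (ppow2 pm)) (psub (psucc pSx) (ppow2 pm)).
Definition pZ := padd (pmul pTop (ppow2 pl)) pm.
Definition pN1 := padd (pmul pZ (ppow2 (psucc pl))) (ppred (ppow2 pl)).
Definition pN := padd (pmul pN1 (pconst 2)) pf.

Ltac evs := repeat (first [apply ev_leb | apply ev_log2 | apply ev_pow2 | apply ev_add | apply ev_mul | apply ev_sub | apply ev_pred | apply ev_succ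
  | apply ev_cond | apply ev_pow2 | apply ev_log2 | (apply ev_proj; reflexivity) | constructor]).

Lemma ev_enc X Y : eval pN [X; Y] (enc X Y).
Proof.
  unfold pN, pN1, pZ, pTop, pl, pm, pLx, pSx, pf, pc, pa, pb.
  eapply ev_val. evs.
  cbn [nth]. unfold enc. destruct (Nat.leb (Nat.log2 (S X)) (Nat.log2 (S Y))); reflexivity.
Qed.


Definition Fo Z l := Z * 2 ^ (S l) + pred (2 ^ l).

Lemma Fo_0 Z : Fo Z 0 = 2 * Z.
Proof. unfold Fo. simpl. lia. Qed.
Lemma Fo_S Z l : Fo Z (S l) = 2 * Fo Z l + 1.
Proof. unfold Fo. assert (H := Nat.pow_nonzero 2 l ltac:(lia)).
  change (2 ^ S (S l)) with (2 * 2 ^ S l). change (2 ^ S l) with (2 * 2 ^ l). 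
  destruct (2 ^ l); [lia|]. simpl. lia. Qed.

Lemma Fo_inj : forall l1 l2 Z1 Z2, Fo Z1 l1 = Fo Z2 l2 -> l1 = l2 /\ Z1 = Z2.
Proof.
  induction l1; intros [|l2] Z1 Z2 H.
  - rewrite !Fo_0 in H. split; lia.
  - rewrite Fo_0, Fo_S in H. lia.
  - rewrite Fo_0, Fo_S in H. lia.
  - rewrite !Fo_S in H. destruct (IHl1 l2 Z1 Z2) as [-> ->]; auto. lia.
Qed.

Lemma qr_inj d q1 q2 r1 r2 : r1 < d -> r2 < d -> q1 * d + r1 = q2 * d + r2 -> q1 = q2 /\ r1 = r2.
Proof. intros. apply (Nat.div_mod_unique d); auto. lia. Qed.

Lemma log2_S_bounds X : 2 ^ Nat.log2 (S X) <= S X < 2 ^ S (Nat.log2 (S X)).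
Proof. apply Nat.log2_spec. lia. Qed.

Lemma m_lt_pow m : m < 2 ^ S (Nat.log2 m).
Proof. destruct m. simpl; lia. apply Nat.log2_spec. lia. Qed.

Definition core f Sx Lx :=
  let m := Nat.log2 (S Sx) in
  let l := S (Nat.log2 m) in
  ((((S Lx * 2 ^ m + (S Sx - 2 ^ m)) * 2 ^ l + m) * 2 ^ (S l) + pred (2 ^ l)) * 2 + f).

Lemma core_inj f1 f2 S1 S2 L1 L2 : f1 <= 1 -> f2 <= 1 -> core f1 S1 L1 = core f2 S2 L2 ->
  f1 = f2 /\ S1 = S2 /\ L1 = L2.
Proof.
  unfold core. intros Hf1 Hf2 H.
  set (m1 := Nat.log2 (S S1)) in *. set (m2 := Nat.log2 (S S2)) in *.
  set (A1 := (S L1 * 2 ^ m1 + (S S1 - 2 ^ m1)) * 2 ^ S (Nat.log2 m1) + m1) in *.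
  set (A2 := (S L2 * 2 ^ m2 + (S S2 - 2 ^ m2)) * 2 ^ S (Nat.log2 m2) + m2) in *.
  assert (E1 : Fo A1 (S (Nat.log2 m1)) = Fo A2 (S (Nat.log2 m2)) /\ f1 = f2).
  { unfold Fo. lia. }
  destruct E1 as [E1 ->]. apply Fo_inj in E1 as [El EA]. injection El as El.
  unfold A1, A2 in EA. rewrite El in EA.
  apply qr_inj in EA as [ET Em]; [| rewrite <- El; apply m_lt_pow | apply m_lt_pow].
  rewrite Em in ET.
  pose proof (log2_S_bounds S1) as B1. pose proof (log2_S_bounds S2) as B2.
  fold m1 in B1. fold m2 in B2. rewrite Em in B1.
  change (2 ^ S m2) with (2 * 2 ^ m2) in *.
  apply qr_inj in ET as [EL ES]; try lia.
Qed.

Lemma enc_core X Y : enc X Y =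
  if Nat.leb (Nat.log2 (S X)) (Nat.log2 (S Y)) then core 0 X Y else core 1 Y X.
Proof. unfold enc, core. destruct (Nat.leb _ _); reflexivity. Qed.

Lemma enc_inj X1 Y1 X2 Y2 : enc X1 Y1 = enc X2 Y2 -> X1 = X2 /\ Y1 = Y2.
Proof.
  rewrite !enc_core.
  destruct (Nat.leb _ _); destruct (Nat.leb _ _); intros H;
    apply core_inj in H as [Hf [HS HL]]; auto; lia.
Qed.

Lemma mul_pow_lt x y i j : x < 2 ^ i -> y < 2 ^ j -> x * 2 ^ j + y < 2 ^ (i + j).
Proof. intros. rewrite Nat.pow_add_r. nia. Qed.

Lemma core_bound f Sx Lx : f <= 1 ->
  S (core f Sx Lx) <= 2 ^ (S (Nat.log2 (S Lx)) + Nat.log2 (S Sx) + S (Nat.log2 (Nat.log2 (S Sx))) + S (S (Nat.log2 (Nat.log2 (S Sx)))) + 1).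
Proof.
  intros Hf. unfold core.
  set (m := Nat.log2 (S Sx)). set (l := S (Nat.log2 m)).
  pose proof (log2_S_bounds Sx) as Bs. pose proof (log2_S_bounds Lx) as BL. fold m in Bs.
  assert (HT : S Lx * 2 ^ m + (S Sx - 2 ^ m) < 2 ^ (S (Nat.log2 (S Lx)) + m)).
  { apply mul_pow_lt; [lia|]. change (2 ^ S m) with (2 * 2 ^ m) in Bs. lia. }
  assert (HZ : (S Lx * 2 ^ m + (S Sx - 2 ^ m)) * 2 ^ l + m < 2 ^ (S (Nat.log2 (S Lx)) + m + l)).
  { apply mul_pow_lt; auto. apply m_lt_pow. }
  assert (HN : ((S Lx * 2 ^ m + (S Sx - 2 ^ m)) * 2 ^ l + m) * 2 ^ S l + pred (2 ^ l)
               < 2 ^ (S (Nat.log2 (S Lx)) + m + l + S l)).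
  { apply mul_pow_lt; auto. change (2 ^ S l) with (2 * 2 ^ l). pose proof (Nat.pow_nonzero 2 l). lia. }
  rewrite (Nat.pow_add_r 2 _ 1). simpl (2 ^ 1). lia.
Qed.

Definition cpair (p q : bstr) : bstr := dec (enc (code p) (code q)).

Lemma cpair_len p q : length (cpair p q) <= (length q + log (length q)) + (length p + log (length p)) + 5.
Proof.
  unfold cpair, log. rewrite len_code, code_dec.
  rewrite (len_code p), (len_code q). rewrite !Nat.add_1_r.
  rewrite enc_core.
  set (a := Nat.log2 (S (code p))). set (b := Nat.log2 (S (code q))).
  destruct (Nat.leb_spec a b) as [Hab|Hab].
  - pose proof (core_bound 0 (code p) (code q) ltac:(lia)) as H.
    apply Nat.log2_le_mono in H. rewrite Nat.log2_pow2 in H by lia. fold a b in H.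
    assert (Nat.log2 a <= Nat.log2 b) by (apply Nat.log2_le_mono; lia). lia.
  - pose proof (core_bound 1 (code q) (code p) ltac:(lia)) as H.
    apply Nat.log2_le_mono in H. rewrite Nat.log2_pow2 in H by lia. fold a b in H.
    assert (Nat.log2 b <= Nat.log2 a) by (apply Nat.log2_le_mono; lia). lia.
Qed.

Lemma cpair_inj p q p' q' : cpair p q = cpair p' q' -> p = p' /\ q = q'.
Proof.
  unfold cpair. intros H. apply (f_equal code) in H. rewrite !code_dec in H.
  apply enc_inj in H as [H1 H2]. apply code_inj in H1. apply code_inj in H2. auto.
Qed.

Lemma cpair_comp : total_computable_str2 cpair.
Proof.
  exists pN. intros p q n. unfold cpair. rewrite code_dec. split.
  - intros H. eapply eval_det; eauto. apply ev_enc.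
  - intros ->. apply ev_enc.
Qed.


Theorem mainTheorem4 (D : Type) (lt : D -> D -> Prop) (rho : nat -> D)
  (Hpo : computable_poset lt rho)
  (phi Umax Umin : bstr -> option D)
  (Hphi : optimal_in (pc_str_D rho) phi)
  (Hmax : optimal_in (MaxPR lt rho) Umax)
  (Hmin : optimal_in (MaxPR (fun x y => lt y x) rho) Umin) :
  (forall (c : bstr -> bstr -> bstr) (J : nat -> nat -> nat) (M : nat),
      total_computable_str2 c ->
      (forall p q p' q', c p q = c p' q' -> p = p' /\ q = q') ->
      (forall p q, length (c p q) <= J (length p) (length q) + M) ->
      le_ct (K phi) (fun d => J (K Umin d) (K Umax d)))
  /\
  le_ct (K phi)
    (fun d => (K Umax d + log (K Umax d)) + (K Umin d + log (K Umin d))).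
Proof.
  split.
  - intros c J M Hc Hinj Hlen. eapply part1; eauto.
  - exact (part1 D lt rho Hpo phi Umax Umin Hphi Hmax Hmin cpair
      (fun x y => (y + log y) + (x + log x)) 5 cpair_comp cpair_inj cpair_len).
Qed.
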